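(* Every rotation $R$ of $\mathbb{R}^4$ can be written as $R=R_0\circ R^{xw}_\psi\circ R^{zw}_\phi\circ R^{xy}_\theta$ for some angles $\theta,\phi,\psi$ and some rotation $R_0$ of $\mathbb{R}^4$ that is the trivial extension of a rotation of $\mathbb{R}^3=\{(x,y,z,0)\}$ (i.e. $R_0$ fixes $(0,0,0,1)$ and maps $\{(x,y,z,0)\}$ to itself).
   Context: A rotation of $\mathbb{R}^n$ is a linear map whose matrix is orthogonal with determinant $1$. Denote coordinates of $\mathbb{R}^4$ by $(x,y,z,w)$ (indices $1,2,3,4$). For coordinate indices $k<j$, the elementary rotation $R^{kj}_\alpha$ is the linear map of $\mathbb{R}^4$ that fixes the other two standard basis vectors and acts on the $k,j$ coordinate plane by $\mathbf{e}_k\mapsto\cos\alpha\,\mathbf{e}_k+\sin\alpha\,\mathbf{e}_j$, $\mathbf{e}_j\mapsto-\sin\alpha\,\mathbf{e}_k+\cos\alpha\,\mathbf{e}_j$. Thus $R^{xy}_\theta$, $R^{zw}_\phi$, $R^{xw}_\psi$ are the elementary rotations of the $x,y$-, $z,w$- and $x,w$-planes respectively. *)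

(* Defs.v *)
From mathcomp Require Import all_boot all_order all_algebra.
From mathcomp Require Import reals trigo.
Set Implicit Arguments. Unset Strict Implicit. Unset Printing Implicit Defensive.
Import Order.TTheory GRing.Theory Num.Theory.
Local Open Scope ring_scope.

(* Linear maps of R^n are represented by matrices acting on COLUMN vectors:
   v |-> M *m v.  Composition f \o g corresponds to the product M_f *m M_g. *)

Definition is_rotation {R : realType} {n : nat} (M : 'M[R]_n) : Prop :=
  M^T *m M = 1%:M /\ \det M = 1.

Definition basis_vec {R : realType} {n : nat} (i : 'I_n) : 'cV[R]_n :=
  \col_(r < n) (r == i)%:R.

Definition elem_rot {R : realType} (k j : 'I_4) (a : R) : 'M[R]_4 :=
  \matrix_(r < 4, c < 4)
    if (r == k) && (c == k) then cos a
    else if (r == j) && (c == j) then cos a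
    else if (r == j) && (c == k) then sin a
    else if (r == k) && (c == j) then - sin a
    else (r == c)%:R.

Definition ix : 'I_4 := @Ordinal 4 0 isT.
Definition iy : 'I_4 := @Ordinal 4 1 isT.
Definition iz : 'I_4 := @Ordinal 4 2 isT.
Definition iw : 'I_4 := @Ordinal 4 3 isT.

Definition Rxy {R : realType} (a : R) : 'M[R]_4 := elem_rot ix iy a.
Definition Rzw {R : realType} (a : R) : 'M[R]_4 := elem_rot iz iw a.
Definition Rxw {R : realType} (a : R) : 'M[R]_4 := elem_rot ix iw a.

Definition trivial_ext_rotation {R : realType} (M : 'M[R]_4) : Prop :=
  is_rotation M /\ M *m basis_vec (R:=R) iw = basis_vec iw /\
  (forall v : 'cV[R]_4, v iw 0 = 0 -> (M *m v) iw 0 = 0).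

(* Main.v *)
Require Import Defs.
From mathcomp Require Import all_boot all_order all_algebra.
From mathcomp Require Import reals trigo.
From mathcomp Require Import ring lra.
Import Order.TTheory GRing.Theory Num.Theory.
Local Open Scope ring_scope.

Ltac mxcomp := apply/matrixP => -[[|[|[|[|?]]]] ?] -[[|[|[|[|?]]]] ?] //;
 rewrite !mxE ?big_ord_recr ?big_ord0 /= ?mxE /=;
 rewrite ?cosD ?sinD ?cosN ?sinN ?cos0 ?sin0; ring.

Lemma Rxy_mul (R : realType) (a b : R) : Rxy a *m Rxy b = Rxy (a + b).
Proof. mxcomp. Qed.
Lemma Rzw_mul (R : realType) (a b : R) : Rzw a *m Rzw b = Rzw (a + b).
Proof. mxcomp. Qed.
Lemma Rxw_mul (R : realType) (a b : R) : Rxw a *m Rxw b = Rxw (a + b).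
Proof. mxcomp. Qed.
Lemma Rxy_tr (R : realType) (a : R) : (Rxy a)^T = Rxy (- a).
Proof. mxcomp. Qed.
Lemma Rzw_tr (R : realType) (a : R) : (Rzw a)^T = Rzw (- a).
Proof. mxcomp. Qed.
Lemma Rxw_tr (R : realType) (a : R) : (Rxw a)^T = Rxw (- a).
Proof. mxcomp. Qed.
Lemma Rxy0 (R : realType) : Rxy (0:R) = 1%:M.
Proof. mxcomp. Qed.
Lemma Rzw0 (R : realType) : Rzw (0:R) = 1%:M.
Proof. mxcomp. Qed.
Lemma Rxw0 (R : realType) : Rxw (0:R) = 1%:M.
Proof. mxcomp. Qed.
Lemma polar (R : realType) (p q : R) : p ^+ 2 + q ^+ 2 = 1 ->
  exists t : R, cos t = p /\ sin t = q.
Proof.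
move=> h.
have hp : -1 <= p <= 1.
  by apply/andP; split; nra.
have hs : Num.sqrt (1 - p ^+ 2) = `|q|.
  by rewrite -h addrC addKr sqrtr_sqr.
have [q0|q0] := leP 0 q.
  exists (acos p); rewrite acosK ?in_itv //=; split => //.
  by rewrite sin_acos // hs ger0_norm.
exists (- acos p); rewrite cosN sinN acosK ?in_itv //=; split => //.
by rewrite sin_acos // hs ltr0_norm // opprK.
Qed.


Lemma polar2 (R : realType) (a b : R) : exists t : R,
  Num.sqrt (a ^+ 2 + b ^+ 2) * cos t = a /\ Num.sqrt (a ^+ 2 + b ^+ 2) * sin t = b.
Proof.
set r := Num.sqrt _.
have r2 : r ^+ 2 = a ^+ 2 + b ^+ 2 by rewrite sqr_sqrtr // addr_ge0 // sqr_ge0.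
have [r0|r0] := eqVneq r 0.
  have a0 : a = 0 by move: r2; rewrite r0; nra.
  have b0 : b = 0 by move: r2; rewrite r0; nra.
  by exists 0; rewrite r0 a0 b0 !mul0r.
have [t [h1 h2]] : exists t : R, cos t = a / r /\ sin t = b / r.
  apply: polar; rewrite !expr_div_n -mulrDl -r2 divff //.
  by rewrite expf_neq0.
by exists t; rewrite h1 h2 ![r * (_ / r)]mulrC !divfK.
Qed.

Definition orth {R : realType} (A : 'M[R]_4) := A^T *m A = 1%:M.

Lemma orthC {R : realType} {A : 'M[R]_4} : orth A -> A *m A^T = 1%:M.
Proof. exact: mulmx1C. Qed.

Lemma orthM {R : realType} {A B : 'M[R]_4} : orth A -> orth B -> orth (A *m B).
Proof.
rewrite /orth => hA hB; rewrite trmx_mul mulmxA -(mulmxA B^T) hA mulmx1 //.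
Qed.

Lemma orthT {R : realType} {A : 'M[R]_4} : orth A -> orth A^T.
Proof. by move=> h; rewrite /orth trmxK orthC. Qed.

Lemma orth_det {R : realType} {A : 'M[R]_4} : orth A -> \det A * \det A = 1.
Proof. by move=> h; rewrite -{1}det_tr -det_mulmx h det1. Qed.

Lemma Rxy_orth (R : realType) (a : R) : orth (Rxy a).
Proof. by rewrite /orth Rxy_tr Rxy_mul addNr Rxy0. Qed.
Lemma Rzw_orth (R : realType) (a : R) : orth (Rzw a).
Proof. by rewrite /orth Rzw_tr Rzw_mul addNr Rzw0. Qed.
Lemma Rxw_orth (R : realType) (a : R) : orth (Rxw a).
Proof. by rewrite /orth Rxw_tr Rxw_mul addNr Rxw0. Qed.

Lemma Rxy_det (R : realType) (a : R) : \det (Rxy a) = 1.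
Proof. by rewrite {1}(splitr a) -Rxy_mul det_mulmx (orth_det (@Rxy_orth R (a/2))). Qed.
Lemma Rzw_det (R : realType) (a : R) : \det (Rzw a) = 1.
Proof. by rewrite {1}(splitr a) -Rzw_mul det_mulmx (orth_det (@Rzw_orth R (a/2))). Qed.
Lemma Rxw_det (R : realType) (a : R) : \det (Rxw a) = 1.
Proof. by rewrite {1}(splitr a) -Rxw_mul det_mulmx (orth_det (@Rxw_orth R (a/2))). Qed.

Lemma mul_bv (R : realType) (A : 'M[R]_4) (i k : 'I_4) :
  (A *m basis_vec i) k 0 = A k i.
Proof.
rewrite mxE (bigD1 i) //= mxE eqxx mulr1 big1 ?addr0 // => l hl.
by rewrite mxE (negbTE hl) mulr0.
Qed.

Lemma sum4 (R : realType) (F : 'I_4 -> R) :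
  \sum_(i < 4) F i = F ix + F iy + F iz + F iw.
Proof.
rewrite !big_ord_recr big_ord0 /= add0r.
by congr (_ + _ + _ + _); congr F; apply: val_inj.
Qed.

Lemma ord4_cases (k : 'I_4) : [\/ k = ix, k = iy, k = iz | k = iw].
Proof.
case: k => [[|[|[|[|?]]]] ?] //.
- by apply: Or41; apply: val_inj.
- by apply: Or42; apply: val_inj.
- by apply: Or43; apply: val_inj.
- by apply: Or44; apply: val_inj.
Qed.

Theorem theorem3 (R : realType) (M : 'M[R]_4) :
  is_rotation M ->
  exists (theta phi psi : R) (R0 : 'M[R]_4),
    trivial_ext_rotation R0 /\
    M = R0 *m Rxw psi *m Rzw phi *m Rxy theta.
Proof.
move=> [hM dM].
have oM : orth M := hM.
have hMC := orthC oM.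
have unit : M iw ix ^+ 2 + M iw iy ^+ 2 + M iw iz ^+ 2 + M iw iw ^+ 2 = 1.
  have := congr1 (fun A : 'M[R]_4 => A iw iw) hMC; rewrite !mxE sum4 !mxE /=.
  by rewrite !expr2.
have [th [h1 h2]] := @polar2 R (M iw ix) (- M iw iy).
have [ph [h3 h4]] := @polar2 R (M iw iw) (M iw iz).
set r := Num.sqrt _ in h1 h2.
set s := Num.sqrt _ in h3 h4.
have [ps [h5 h6]] : exists t : R, cos t = s /\ sin t = r.
  apply: polar; rewrite !sqr_sqrtr ?addr_ge0 ?sqr_ge0 //.
  rewrite sqrrN; lra.
set N := Rxw ps *m Rzw ph *m Rxy th.
have oN : orth N by rewrite /N; apply: orthM; [apply: orthM|]; 
  [exact: Rxw_orth|exact: Rzw_orth|exact: Rxy_orth].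
have hNT : N^T = Rxy (- th) *m (Rzw (- ph) *m Rxw (- ps)).
  by rewrite /N !trmx_mul Rxy_tr Rzw_tr Rxw_tr mulmxA.
have hu : N^T *m basis_vec iw = M^T *m basis_vec iw.
  apply/matrixP => k j; rewrite (ord1 j) hNT -!mulmxA mul_bv.
  rewrite mxE sum4 !mxE !sum4 !mxE !sum4 !mxE /= !cosN !sinN.
  case: (ord4_cases k) => -> /=;
  rewrite ?h5 ?h6 !(mul0r, mulr0, mul1r, mulr1, addr0, add0r, opprK); lra.
exists th, ph, ps, (M *m N^T).
have oR0 : orth (M *m N^T) := orthM oM (orthT oN).
have hw : (M *m N^T) *m basis_vec iw = basis_vec iw.
  by rewrite -mulmxA hu mulmxA hMC mul1mx.
have hw' : (M *m N^T)^T *m basis_vec iw = basis_vec iw.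
  by rewrite -{1}hw mulmxA (oR0 : _ = _) mul1mx.
split; last first.
  rewrite -!mulmxA.
  have -> : Rxw ps *m (Rzw ph *m Rxy th) = N by rewrite /N mulmxA.
  by rewrite (oN : N^T *m N = 1%:M) mulmx1.
rewrite /trivial_ext_rotation /is_rotation.
split; first split; first exact: oR0.
  by rewrite det_mulmx det_tr /N !det_mulmx Rxw_det Rzw_det Rxy_det dM !mul1r.
split; first exact: hw.
have row : forall k, (M *m N^T) iw k = (k == iw)%:R.
  move=> k; have := congr1 (fun A : 'cV[R]_4 => A k 0) hw'.
  by rewrite /= mul_bv mxE => ->; rewrite /basis_vec mxE.
move=> v hv; rewrite mxE sum4 !row hv /=.
by rewrite !mul0r mulr0 !addr0.
Qed.
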